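(* Let $b,n\geq 2$ be integers, let $a=\frac{b^n-1}{b-1}$, let $d\in\mathbb{P}$ with $\gcd(a,d)=1$, and let $$A=\left(a,\ ba+d,\ b^2a+\tfrac{b^2-1}{b-1}d,\ \dots,\ b^{n-1}a+\tfrac{b^{n-1}-1}{b-1}d\right).$$ Then the type of $\langle A\rangle$ is $t(A)=n-1$, and $$PF(A)=\{F(A),\ F(A)-d,\ \dots,\ F(A)-(n-2)d\}.$$
   Context: $\mathbb{P}$ denotes the positive integers. $\langle A\rangle$ is the numerical semigroup of all nonnegative integer combinations of entries of $A$; $F(A)$ is the largest integer not in $\langle A\rangle$. An integer $u\notin\langle A\rangle$ is a pseudo-Frobenius number if $u+s\in\langle A\rangle$ for all $s\in\langle A\rangle\setminus\{0\}$; $PF(A)$ is the set of pseudo-Frobenius numbers and the type $t(A)$ is its cardinality. *)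

(* Defs.v *)
From mathcomp Require Import all_boot all_order all_algebra.
Set Implicit Arguments. Unset Strict Implicit. Unset Printing Implicit Defensive.
Import Order.TTheory GRing.Theory Num.Theory.
Local Open Scope ring_scope.

Definition in_sg (A : seq nat) (z : int) : Prop :=
  exists c : seq nat, size c = size A /\
    z = ((\sum_(i < size A) nth 0%N c i * nth 0%N A i)%N)%:Z.

Definition is_frobenius (A : seq nat) (F : int) : Prop :=
  ~ in_sg A F /\ forall z : int, F < z -> in_sg A z.

Definition is_PF (A : seq nat) (u : int) : Prop :=
  ~ in_sg A u /\ forall s : int, in_sg A s -> s != 0 -> in_sg A (u + s).

Definition gen (b a d i : nat) : nat :=
  (b ^ i * a + (b ^ i - 1) %/ (b - 1) * d)%N.

Definition genseq (b n d : nat) : seq nat :=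
  let a := ((b ^ n - 1) %/ (b - 1))%N in [seq gen b a d i | i <- iota 0 n].

(* Main.v *)
Require Import Defs.
From mathcomp Require Import all_boot all_order all_algebra.
From mathcomp Require Import zify.
Set Implicit Arguments. Unset Strict Implicit. Unset Printing Implicit Defensive.

Fixpoint geom (b i : nat) : nat := if i is j.+1 then b * geom b j + 1 else 0.

Lemma geomS b i : geom b i.+1 = geom b i + b ^ i.
Proof. elim: i => [|i IH]; first by rewrite /= muln0 expn0.
change (geom b i.+2) with (b * geom b i.+1 + 1).
rewrite expnS {1}IH mulnDr. change (geom b i.+1) with (b * geom b i + 1). lia. Qed.

Lemma geom_mul b i : 1 <= b -> (b - 1) * geom b i = b ^ i - 1.
Proof.
move=> hb; elim: i => [|i IH]; first by rewrite muln0 expn0.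
rewrite geomS mulnDr IH expnS mulnBl mul1n.
have : 0 < b ^ i by rewrite expn_gt0 hb.
have : b ^ i <= b * b ^ i by rewrite leq_pmull.
lia.
Qed.

Lemma geomE b i : 2 <= b -> (b ^ i - 1) %/ (b - 1) = geom b i.
Proof. move=> hb; rewrite -geom_mul ?mulKn //; lia. Qed.

Lemma geom_ge b i : 1 <= b -> i <= geom b i.
Proof. move=> hb; elim: i => // i IH; rewrite geomS.
have : 0 < b ^ i by rewrite expn_gt0 hb. lia. Qed.

Inductive V (b n : nat) : nat -> nat -> Prop :=
| V0 : V b n 0 0
| VS P r i : i < n -> V b n P r -> V b n (P + b ^ i) (r + geom b i).

Lemma V_mul b n P r i m : i < n -> V b n P r -> V b n (P + m * b ^ i) (r + m * geom b i).
Proof. move=> hi hV; elim: m => [|m IH]; first by rewrite !mul0n !addn0.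
have -> : P + m.+1 * b ^ i = (P + m * b ^ i) + b ^ i by rewrite mulSn; lia.
have -> : r + m.+1 * geom b i = (r + m * geom b i) + geom b i by rewrite mulSn; lia.
exact: VS. Qed.

Lemma V_add b n P r P' r' : V b n P r -> V b n P' r' -> V b n (P + P') (r + r').
Proof. move=> h1; elim=> [|P1 r1 i hi _ IH]; first by rewrite !addn0.
by rewrite !addnA; apply: VS. Qed.

Lemma V_pred b n P r : V b n P r -> 0 < r -> V b n P r.-1.
Proof.
elim=> [//|P1 r1 i hi hV IH] hr.
case: (posnP r1) => [r0|rpos].
- subst r1; rewrite add0n. case: i hi hr => [|j] hi hr; first by [].
  change (geom b j.+1) with (b * geom b j + 1).
  rewrite expnS addn1 /=. rewrite -[b * geom b j]add0n.
  apply: V_mul => //; exact: ltnW.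
- have -> : (r1 + geom b i).-1 = r1.-1 + geom b i by lia.
  by apply: VS => //; apply: IH.
Qed.

Lemma V_down b n P r r' : V b n P r -> r' <= r -> V b n P r'.
Proof.
move=> hV hle; have -> : r' = r - (r - r') by lia.
elim: (r - r') => [|k IH]; first by rewrite subn0.
case: (posnP (r - k)) => h.
- have -> : r - k.+1 = 0 by lia. by rewrite -h.
- have -> : r - k.+1 = (r - k).-1 by lia. exact: V_pred.
Qed.

Lemma V_ones b n P r m : 0 < n -> V b n P r -> V b n (P + m) r.
Proof. move=> hn hV; have := V_mul m hn hV. by rewrite expn0 muln1 /= muln0 addn0. Qed.

Lemma V_top b n : 0 < n -> V b n (b ^ n) (geom b n - 1).
Proof.
case: n => // n _.
have := V_mul b (ltnSn n) (V0 b n.+1).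
by rewrite !add0n -expnS /= addnK.
Qed.

Lemma V_dec b n P r : V b n.+1 P r ->
  exists c0 P' r', V b n P' r' /\ P = c0 + b * P' /\ r = r' + P'.
Proof.
elim=> [|P1 r1 i hi _ [c0 [P' [r' [hV [-> ->]]]]]].
- by exists 0, 0, 0; split; [exact: V0| rewrite muln0].
- case: i hi => [|j] hj.
  + exists c0.+1, P', r'; split => //; rewrite expn0 /=; lia.
  + exists c0, (P' + b ^ j), (r' + geom b j); split; first exact: VS.
    rewrite geomS expnS mulnDr; lia.
Qed.

Lemma V_lift b n X r : V b n X r -> V b n.+1 (b * X) (r + X).
Proof.
elim=> [|P1 r1 i hi _ IH]; first by rewrite muln0; exact: V0.
have := VS (hi : i.+1 < n.+1) IH.
by rewrite geomS expnS mulnDr; congr (V _ _ _ _); lia.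
Qed.

Lemma V_L b n P r : 1 <= b -> V b n P r -> P < b ^ n -> r + n <= geom b n.
Proof.
move=> hb; elim: n P r => [|n IH] P r.
- by case=> // P1 r1 i.
- move=> /V_dec [c0 [P' [r' [hV [-> ->]]]]] hP.
  have hP' : P' < b ^ n.
    by rewrite -(ltn_pmul2l (hb : 0 < b)) -expnS; lia.
  have := IH _ _ hV hP'. rewrite geomS. lia.
Qed.

Lemma V_C b n P : 1 <= b -> P < b ^ n -> exists r1 r2,
  V b n P r1 /\ V b n (b ^ n - 1 - P) r2 /\ r1 + r2 + n = geom b n.
Proof.
move=> hb; elim: n P => [|n IH] P hP.
- exists 0, 0; rewrite expn0 in hP; have -> : P = 0 by lia.
  by split; [exact: V0| split; [rewrite expn0; exact: V0|]].
- have hP1 : P %/ b < b ^ n by rewrite ltn_divLR // -expnSr.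
  have hP0 : P %% b < b by rewrite ltn_mod.
  have [r1 [r2 [h1 [h2 he]]]] := IH _ hP1.
  exists (r1 + P %/ b), (r2 + (b ^ n - 1 - P %/ b)); split; [|split].
  + have := V_ones (P %% b) (ltn0Sn n) (V_lift h1).
    by rewrite mulnC -divn_eq.
  + have E : b * (b ^ n - 1 - P %/ b) + (b - 1 - P %% b) = b ^ n.+1 - 1 - P.
    rewrite {3}(divn_eq P b) expnS !mulnBr muln1.
    have : P %/ b * b <= b * (b^n - 1) by rewrite mulnC leq_mul2l; lia.
    rewrite mulnBr muln1 mulnC. have : b <= b * b ^ n by rewrite leq_pmulr ?expn_gt0 ?hb.
    lia.
    by rewrite -E; exact: (V_ones (b - 1 - P %% b) (ltn0Sn n) (V_lift h2)).
  + rewrite geomS. have : 0 < b ^ n by rewrite expn_gt0 hb. lia.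
Qed.

Lemma size_genseq b n d : size (genseq b n d) = n.
Proof. by rewrite /genseq size_map size_iota. Qed.

Lemma nth_genseq b n d i : 2 <= b -> i < n ->
  nth 0 (genseq b n d) i = geom b n * b ^ i + d * geom b i.
Proof.
move=> hb hi; rewrite /genseq (nth_map 0) ?size_iota // nth_iota // add0n /gen.
by rewrite !geomE // mulnC [_ * d]mulnC.
Qed.

Lemma in_sgV b n d z : 2 <= b -> in_sg (genseq b n d) z <->
  exists P r, V b n P r /\ z = Posz (geom b n * P + d * r).
Proof.
move=> hb; split.
- case=> c [hc ->]; rewrite size_genseq.
  suff H : forall k, k <= n -> exists P r, V b n P r /\
     (\sum_(i < k) nth 0 c i * nth 0 (genseq b n d) i)%N = geom b n * P + d * r.
    by have [P [r [hV ->]]] := H n (leqnn n); exists P, r.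
  elim=> [|k IH] hk; first by exists 0, 0; rewrite big_ord0 !muln0; split => //; exact: V0.
  have [P [r [hV e]]] := IH (ltnW hk).
  exists (P + nth 0 c k * b ^ k), (r + nth 0 c k * geom b k); split; first exact: V_mul.
  rewrite big_ord_recr /= e nth_genseq //.
  rewrite !mulnDr !mulnA [geom b n * _]mulnC [d * _]mulnC; lia.
- case=> P [r [hV ->]]; elim: hV => [|P1 r1 i hi _ [c [hc e]]].
  + exists (nseq n 0); rewrite size_nseq size_genseq; split => //.
    rewrite big1 ?muln0 // => i _; by rewrite nth_nseq if_same.
  + exists (incr_nth c i); rewrite size_incr_nth hc size_genseq hi; split => //.
    move: e; rewrite size_genseq => /eqP; rewrite eqz_nat => /eqP e.
    apply/eqP; rewrite eqz_nat; apply/eqP.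
    under eq_bigr => j _ do rewrite nth_incr_nth mulnDl.
    rewrite big_split /= -e.
    rewrite (bigD1 (Ordinal hi)) //= eqxx mul1n big1 ?addn0.
      rewrite nth_genseq // !mulnDr; lia.
    move=> j hj; case: eqP => // hij; exfalso; move/eqP: hj; apply.
    by apply: val_inj.
Qed.

Lemma resid a d z : 0 < a -> 0 < d -> coprime a d -> exists r, r < a /\ z = d * r %[mod a].
Proof.
move=> ha hd hc; have [x hx] := Bezoutl d ha.
rewrite (eqP hc) => /dvdnP [q hq].
have hxd : x * d + d <= a * d by rewrite -mulSnr leq_mul2r hx orbT.
have hy : d * (a - x) = a * (d - q) + 1.
  rewrite mulnBr mulnBr [d * a]mulnC [d * x]mulnC [a * q]mulnC. 
  have : q * a <= a * d by lia.
  lia.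
exists ((z * (a - x)) %% a); split; first by rewrite ltn_mod.
rewrite modnMmr mulnCA hy mulnDr muln1 mulnCA.
by rewrite -modnDml modnMr add0n.
Qed.

Definition Sg b n d u := exists P r, V b n P r /\ u = geom b n * P + d * r.

Lemma a_ge b n : 1 <= b -> n <= geom b n.
Proof. exact: geom_ge. Qed.

Lemma notin b n d k : 2 <= b -> 2 <= n -> 0 < d -> coprime (geom b n) d -> k <= n - 2 ->
  ~ Sg b n d (geom b n * (b ^ n - 1) + d * (geom b n - 1 - k)).
Proof.
move=> hb hn hd hc hk [P [r [hV e]]].
have hb1 : 1 <= b by lia.
have ha := a_ge n hb1.
set a := geom b n in ha hc e hV.
have hX : 0 < b ^ n by rewrite expn_gt0 hb1.
case: (ltnP P (b ^ n)) => hP.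
- have hL := V_L hb1 hV hP; rewrite -/a in hL.
  have h1 : a * P <= a * (b ^ n - 1) by rewrite leq_mul2l; apply/orP; right; lia.
  have h2 : d * r < d * (a - 1 - k) by rewrite ltn_pmul2l //; lia.
  lia.
- have h1 : a * (b ^ n - 1) < a * P by rewrite ltn_pmul2l; lia.
  have hr : r < a - 1 - k.
    have : d * r < d * (a - 1 - k) by lia.
    by rewrite ltn_pmul2l.
  have e2 : d * (a - 1 - k - r) = a * (P - (b ^ n - 1)).
    rewrite (mulnBr d (a - 1 - k) r) (mulnBr a P (b ^ n - 1)); lia.
  have : a %| d * (a - 1 - k - r) by rewrite e2 dvdn_mulr.
  rewrite Gauss_dvdr // => /dvdn_leq; lia.
Qed.

Lemma frob b n d z : 2 <= b -> 2 <= n -> 0 < d -> coprime (geom b n) d ->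
  geom b n * (b ^ n - 1) + d * (geom b n - 1) < z -> Sg b n d z.
Proof.
move=> hb hn hd hc hz.
have hb1 : 1 <= b by lia.
have ha := a_ge n hb1.
set a := geom b n in ha hc hz *.
have ha0 : 0 < a by lia.
have [r [hr er]] := resid z ha0 hd hc.
have hdr : d * r <= d * (a - 1) by rewrite leq_mul2l; apply/orP; right; lia.
have hdz : d * r <= z. move: hdr hz. move: (d * r) (d * (a - 1)) (a * (b ^ n - 1)) => X Y W. lia.
move/eqP: er; rewrite eqn_mod_dvd // => /dvdnP [P eP].
have h1 : a * (b ^ n - 1) < a * P.
  rewrite [a * P]mulnC -eP. move: hdr hz. move: (d * r) (d * (a - 1)) (a * (b ^ n - 1)) => X Y W. lia.
have hP : b ^ n <= P.
  have : b ^ n - 1 < P by rewrite -(ltn_pmul2l ha0).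
  have : 0 < b ^ n by rewrite expn_gt0 hb1. lia.
exists P, r; split.
- have := V_ones (P - b ^ n) (ltnW hn) (V_down (V_top b (ltnW hn)) (_ : r <= a - 1)).
  rewrite subnKC //; apply; lia.
- rewrite [a * P]mulnC -eP subnK //.
Qed.

Lemma Vpow b n i : 1 <= b -> i < n -> exists P r, V b n P r /\ P + 1 = b ^ i /\ r + i = geom b i.
Proof.
move=> hb; elim: i => [|i IH] hi; first by exists 0, 0; rewrite expn0; split; [exact: V0|split].
have [P [r [hV [e1 e2]]]] := IH (ltnW hi).
exists (P + (b - 1) * b ^ i), (r + (b - 1) * geom b i); split; first by apply: V_mul => //; exact: ltnW.
change (geom b i.+1) with (b * geom b i + 1).
rewrite expnS !mulnBl !mul1n.
have : b ^ i <= b * b ^ i by rewrite leq_pmull.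
have : geom b i <= b * geom b i by rewrite leq_pmull.
move: (b * b ^ i) (b * geom b i) => Y Z. lia.
Qed.

Lemma pfgen b n d k P' r' : 2 <= b -> 2 <= n -> 0 < d -> k <= n - 2 ->
  V b n P' r' -> 0 < P' + r' ->
  Sg b n d (geom b n * (b ^ n - 1) + d * (geom b n - 1 - k) + (geom b n * P' + d * r')).
Proof.
move=> hb hn hd hk hV.
have hb1 : 1 <= b by lia.
have ha := a_ge n hb1.
have [X eX] : exists X, b ^ n = X.+1 by exists (b ^ n).-1; rewrite prednK // expn_gt0 hb1.
have [m em] : exists m, geom b n = k + 1 + m by exists (geom b n - k - 1); lia.
rewrite eX em.
have hVtop := V_top b (ltnW hn).
rewrite eX em in hVtop.
have -> : X.+1 - 1 = X by lia.
have -> : k + 1 + m - 1 - k = m by lia.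
elim: hV => [//|P1 r1 i hi hV IH] hpos.
case: (posnP (P1 + r1)) => h0.
- have -> : P1 = 0 by lia. have -> : r1 = 0 by lia.
  rewrite !add0n.
  case: (posnP i) => hi0.
  + subst i. exists X.+1, m; split; first by apply: (V_down hVtop); lia.
    rewrite expn0 /=. lia.
  + case: (leqP i k) => hik.
    * have [Pi [ri [hVi [e1 e2]]]] := Vpow hb1 hi.
      exists (X.+1 + Pi), (m + geom b i); split.
        by apply: V_down (V_add hVtop hVi) _; lia.
      rewrite -e1. lia.
    * have hgi := geom_ge i hb1.
      exists (b ^ i + X + d), (geom b i - 1 - k); split.
        have h1 : V b n (0 + b ^ i) (0 + geom b i) by exact: VS (V0 b n).
        rewrite !add0n in h1.
        have h2 := V_down h1 (_ : geom b i - 1 - k <= geom b i).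
        by rewrite -addnA; apply: V_ones (ltnW hn) _; apply: h2; lia.
      have [g eg] : exists g, geom b i = k + 1 + g by exists (geom b i - k - 1); lia.
      rewrite eg. have -> : k + 1 + g - 1 - k = g by lia.
      lia.
- have [P [r [hVP eP]]] := IH h0.
  exists (P + b ^ i), (r + geom b i); split; first exact: VS.
  move: eP; rewrite !mulnDr; lia.
Qed.

Lemma gaps b n d u : 2 <= b -> 2 <= n -> 0 < d -> coprime (geom b n) d -> ~ Sg b n d u ->
  exists k, k <= n - 2 /\ u <= geom b n * (b ^ n - 1) + d * (geom b n - 1 - k) /\
   Sg b n d (geom b n * (b ^ n - 1) + d * (geom b n - 1 - k) - u).
Proof.
move=> hb hn hd hc hu.
have hb1 : 1 <= b by lia.
have ha := a_ge n hb1.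
have ha0 : 0 < geom b n by lia.
have hVtop := V_top b (ltnW hn).
have hXp : 0 < b ^ n by rewrite expn_gt0 hb1.
have [r [hr er]] := resid u ha0 hd hc.
have [s es] : exists s, geom b n = r + 1 + s by exists (geom b n - r - 1); lia.
case: (leqP (d * r) u) => hdr.
- move/eqP: er; rewrite eqn_mod_dvd // => /dvdnP [P eP].
  have eu : u = geom b n * P + d * r by rewrite mulnC -eP subnK.
  case: (leqP (b ^ n) P) => hP.
    exfalso; apply: hu; exists P, r; split => //.
    have := V_ones (P - b ^ n) (ltnW hn) (V_down hVtop (_ : r <= geom b n - 1)).
    rewrite subnKC //; apply; lia.
  have [r1 [r2 [h1 [h2 he]]]] := V_C hb1 hP.
  case: (leqP r r1) => hrr.
    by exfalso; apply: hu; exists P, r; split => //; apply: V_down h1 _.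
  have hPX : geom b n * P <= geom b n * (b ^ n - 1) by rewrite leq_mul2l; lia.
  have eX : geom b n * (b ^ n - 1 - P) = geom b n * (b ^ n - 1) - geom b n * P by rewrite mulnBr.
  case: (leqP (r + n) (geom b n + 1)) => hrn.
  + exists (n - 2); have [t et] : exists t, geom b n + 1 = r + n + t by exists (geom b n + 1 - r - n); lia.
    have -> : geom b n - 1 - (n - 2) = r + t by lia.
    split => //; split; first by rewrite eu mulnDr; lia.
    exists (b ^ n - 1 - P), t; split.
      by apply: V_down h2 _; lia.
    rewrite eu eX mulnDr. move: hPX. move: (geom b n * P) (geom b n * (b ^ n - 1)) => Y Z. lia.
  + exists (geom b n - 1 - r); split; first by lia.
    have -> : geom b n - 1 - (geom b n - 1 - r) = r by lia.
    split; first by rewrite eu; lia.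
    exists (b ^ n - 1 - P), 0; split.
      by rewrite -[b ^ n - 1 - P]add0n; apply: V_ones (ltnW hn) (V0 b n).
    rewrite eu eX. move: hPX. move: (geom b n * P) (geom b n * (b ^ n - 1)) => Y Z. lia.
- move/eqP: er; rewrite eq_sym eqn_mod_dvd ?(ltnW hdr) // => /dvdnP [m em].
  have hm : 0 < m by case: m em => [|m] //; rewrite mul0n; lia.
  exists 0; split => //.
  have -> : geom b n - 1 - 0 = r + s by lia.
  have hdr2 : d * r <= d * (r + s) by rewrite leq_mul2l leq_addr orbT.
  split; first by move: hdr hdr2; move: (geom b n * (b ^ n - 1)) (d * r) (d * (r + s)) => Y Z W; lia.
  exists (b ^ n + (m - 1)), s; split.
    by apply: V_ones (ltnW hn) (V_down hVtop _); lia.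
  have e1 : geom b n * (b ^ n + (m - 1)) = geom b n * (b ^ n - 1) + m * geom b n.
    have -> : b ^ n + (m - 1) = (b ^ n - 1) + m by lia.
    by rewrite mulnDr [m * _]mulnC.
  rewrite e1 -em mulnDr. move: hdr hdr2. 
  move: (geom b n * (b ^ n - 1)) (d * r) (d * s) => Y Z W. lia.
Qed.

Lemma in_sgS b n d u : 2 <= b -> in_sg (genseq b n d) (Posz u) <-> Sg b n d u.
Proof.
move=> hb; rewrite in_sgV //; split; case=> P [r [hV e]]; exists P, r; split => //.
- by case: e.
- by rewrite e.
Qed.

Lemma in_sg_nat A z : in_sg A z -> exists u, z = Posz u.
Proof. by case=> c [_ ->]; eexists. Qed.

Lemma FkE b n d k : 1 <= b -> k <= n - 2 ->
  (Posz (geom b n * (b ^ n - 1) + d * (geom b n - 1)) - Posz (k * d))%R =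
  Posz (geom b n * (b ^ n - 1) + d * (geom b n - 1 - k)).
Proof.
move=> hb hk; have ha := a_ge n hb.
have hkd : k * d <= d * (geom b n - 1) by rewrite mulnC leq_mul2l; lia.
rewrite subzn; last by move: hkd; move: (k * d) (d * (geom b n - 1)) (geom b n * (b ^ n - 1)) => Y Z W; lia.
congr Posz; rewrite (mulnBr d (geom b n - 1) k) [d * k]mulnC.
move: hkd; move: (k * d) (d * (geom b n - 1)) (geom b n * (b ^ n - 1)) => Y Z W; lia.
Qed.

Unset Implicit Arguments.
Import Order.TTheory GRing.Theory Num.Theory.
Local Open Scope ring_scope.

Theorem theorem4p3 (b n d : nat) :
  (2 <= b)%N -> (2 <= n)%N -> (0 < d)%N ->
  coprime ((b ^ n - 1) %/ (b - 1)) d ->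
  exists F : int,
    is_frobenius (genseq b n d) F /\
    (forall u : int, is_PF (genseq b n d) u <->
       u \in [seq F - (k * d)%N%:Z | k <- iota 0 (n - 1)]) /\
    size (undup [seq F - (k * d)%N%:Z | k <- iota 0 (n - 1)]) = (n - 1)%N.
Proof.
move=> hb hn hd hc; rewrite geomE // in hc.
have hb1 : (1 <= b)%N by lia.
have ha := a_ge n hb1.
exists (Posz (geom b n * (b ^ n - 1) + d * (geom b n - 1))).
have hF : ~ in_sg (genseq b n d) (Posz (geom b n * (b ^ n - 1) + d * (geom b n - 1))).
  rewrite in_sgS //; have := @notin b n d 0 hb hn hd hc (leq0n _).
  by rewrite subn0.
have hfrob : forall z : int, Posz (geom b n * (b ^ n - 1) + d * (geom b n - 1)) < z ->
    in_sg (genseq b n d) z.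
  case=> zn hz; last by [].
  rewrite in_sgS //; apply: frob => //; by rewrite ltz_nat in hz.
split; first by split.
split.
- move=> u; split.
  + case=> hu hcl.
    case: u hu hcl => un hu hcl; last first.
      exfalso; apply: hF.
      have := hcl (Posz (geom b n * (b ^ n - 1) + d * (geom b n - 1) + un.+1)).
      set FF := (geom b n * (b ^ n - 1) + d * (geom b n - 1))%N.
      have e : - (Posz un.+1) + Posz (FF + un.+1) = Posz FF by rewrite PoszD addrC addrK.
      rewrite NegzE e; apply.
        by apply: hfrob; rewrite ltz_nat addnS ltnS leq_addr.
      by rewrite eqz_nat addnS.
    have [k [hk [hle hS]]] := gaps hb hn hd hc (fun h => hu (proj2 (in_sgS _ _ _ hb) h)).
    have hFk := FkE d hb1 hk.
    have hk1 : (k < n - 1)%N by lia.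
    case: (posnP (geom b n * (b ^ n - 1) + d * (geom b n - 1 - k) - un)) => h0.
      apply/mapP; exists k; first by rewrite mem_iota.
      by rewrite hFk; congr Posz; lia.
    exfalso; apply: (notin hb hn hd hc hk).
    apply/(in_sgS _ _ _ hb).
    have := hcl _ (proj2 (in_sgS _ _ _ hb) hS).
    rewrite -PoszD subnKC //; apply.
    by rewrite eqz_nat -lt0n.
  + case/mapP => k; rewrite mem_iota add0n => /andP [_ hk1] ->.
    have hk : (k <= n - 2)%N by lia.
    rewrite (FkE d hb1 hk); split.
      by rewrite in_sgS //; exact: notin.
    move=> s /(in_sgV _ _ _ hb) [P [r [hV ->]]] hs0.
    rewrite -PoszD in_sgS //; apply: pfgen => //.
    case: (posnP (P + r)) => // h0.
    have hP0 : P = 0%N by lia. have hr0 : r = 0%N by lia. by rewrite hP0 hr0 !muln0 in hs0.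
- rewrite undup_id ?size_map ?size_iota //.
  rewrite map_inj_uniq ?iota_uniq // => k1 k2 /addrI /oppr_inj /eqP.
  by rewrite eqz_nat eqn_pmul2r // => /eqP.
Qed.
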